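(* Let $n\ge1$. Then $Inn(Q_n)$ is an elementary abelian $2$-group of order $2^{2^n-2}$. Moreover, every $f\in Inn(Q_n)$ is a product of disjoint transpositions of the form $(x,-x)$, $x\in Q_n$.
   Context: Cayley--Dickson loops: $Q_0=\{1,-1\}\subset\mathbb{R}$ with conjugation $x^*=x$. For $n\ge1$, $Q_n=\{(x,0),(x,1)\mid x\in Q_{n-1}\}$ with multiplication $(x,0)(y,0)=(xy,0)$, $(x,0)(y,1)=(yx,1)$, $(x,1)(y,0)=(xy^*,1)$, $(x,1)(y,1)=(-y^*x,0)$ and conjugation $(x,0)^*=(x^*,0)$, $(x,1)^*=(-x,1)$, where $-(x,a)=(-x,a)$. $Q_n$ is a loop of order $2^{n+1}$ with neutral element $1=(1,0,\dots,0)$; $-1=(-1,0,\dots,0)$ and $-x=(-1)x$. For a loop $Q$, $L_x(a)=xa$, $R_x(a)=ax$, $Mlt(Q)=\langle L_x,R_x\mid x\in Q\rangle$ and $Inn(Q)=\{f\in Mlt(Q)\mid f(1)=1\}$. *)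

(* Defs.v *)
From HB Require Import structures.
From mathcomp Require Import all_boot all_order all_fingroup all_solvable.
Set Implicit Arguments. Unset Strict Implicit. Unset Printing Implicit Defensive.

(* Q_0 = {1,-1} is encoded by bool (false = 1, true = -1);
   Q_{n+1} = Q_n * bool, the element (x, a) with a in {0,1} encoded as
   (x, false) for a = 0 and (x, true) for a = 1. *)
Fixpoint CD (n : nat) : finType :=
  match n with
  | 0 => bool
  | m.+1 => (CD m * bool)%type
  end.

Fixpoint CDneg (n : nat) : CD n -> CD n :=
  match n return CD n -> CD n with
  | 0 => fun x => ~~ x
  | m.+1 => fun x => (CDneg x.1, x.2)
  end.

Fixpoint CDconj (n : nat) : CD n -> CD n :=
  match n return CD n -> CD n with
  | 0 => fun x => x
  | m.+1 => fun x => if x.2 then (CDneg x.1, true) else (CDconj x.1, false)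
  end.

Fixpoint CDmul (n : nat) : CD n -> CD n -> CD n :=
  match n return CD n -> CD n -> CD n with
  | 0 => fun x y => x (+) y   (* sign multiplication in {1,-1} *)
  | m.+1 => fun xa yb =>
      let x := xa.1 in let y := yb.1 in
      match xa.2, yb.2 with
      | false, false => (CDmul x y, false)
      | false, true  => (CDmul y x, true)
      | true,  false => (CDmul x (CDconj y), true)
      | true,  true  => (CDneg (CDmul (CDconj y) x), false)
      end
  end.

Fixpoint CDone (n : nat) : CD n :=
  match n return CD n with
  | 0 => false
  | m.+1 => (CDone m, false)
  end.

(* The generators L_x, R_x of Mlt(Q_n), as permutations of Q_n.
   (Q_n is a loop, so every L_x, R_x is a bijection; a permutation p
   belongs to this set iff p is (extensionally) some L_x or some R_x.) *)
Definition mlt_gens (n : nat) : {set {perm CD n}} :=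
  [set p : {perm CD n} |
     [exists x : CD n, [forall a : CD n, p a == CDmul x a]]
  || [exists x : CD n, [forall a : CD n, p a == CDmul a x]]].

Definition Mlt (n : nat) : {set {perm CD n}} := (<<mlt_gens n>>)%g.

Definition Inn (n : nat) : {set {perm CD n}} :=
  [set f in Mlt n | f (CDone n) == CDone n].

(* Main.v *)
Require Import Defs.
From HB Require Import structures.
From mathcomp Require Import all_boot all_order all_fingroup all_solvable.
Set Implicit Arguments. Unset Strict Implicit. Unset Printing Implicit Defensive.

Fixpoint sgn (n : nat) : CD n -> bool :=
  match n return CD n -> bool with
  | 0 => fun x => x
  | m.+1 => fun x => sgn x.1
  end.

Fixpoint IT (n : nat) : finType :=
  match n with
  | 0 => unit
  | m.+1 => (IT m * bool)%type
  end.

Fixpoint ix (n : nat) : CD n -> IT n :=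
  match n return CD n -> IT n with
  | 0 => fun _ => tt
  | m.+1 => fun x => (ix x.1, x.2)
  end.

Fixpoint xo (n : nat) : IT n -> IT n -> IT n :=
  match n return IT n -> IT n -> IT n with
  | 0 => fun _ _ => tt
  | m.+1 => fun x y => (xo x.1 y.1, x.2 (+) y.2)
  end.

Definition iz n (x : CD n) := ix x == ix (CDone n).

Lemma negK n (x : CD n) : CDneg (CDneg x) = x.
Proof. elim: n x => [|m IH] /=; first by case. by case=> u b /=; rewrite IH. Qed.

Lemma neg_inj n : injective (@CDneg n).
Proof. exact: can_inj (@negK n). Qed.

Lemma sgn_neg n (x : CD n) : sgn (CDneg x) = ~~ sgn x.
Proof. elim: n x => [|m IH] /=; first by case. by case=> u b /=; rewrite IH. Qed.

Lemma neg_neq n (x : CD n) : (CDneg x == x) = false.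
Proof. apply/eqP=> h. by move: (sgn_neg x); rewrite h; case: (sgn x). Qed.

Lemma ix_neg n (x : CD n) : ix (CDneg x) = ix x.
Proof. elim: n x => [|m IH] //=. by case=> u b /=; rewrite IH. Qed.

Lemma iz_neg n (x : CD n) : iz (CDneg x) = iz x.
Proof. by rewrite /iz ix_neg. Qed.

Lemma ixP n (x y : CD n) : ix x = ix y -> y = x \/ y = CDneg x.
Proof.
elim: n x y => [|m IH] /=; first by case; case; auto.
case=> u b [v c] /= [/IH [->|->] ->]; auto.
Qed.

Lemma izS m (u : CD m) b : iz ((u, b) : CD m.+1) = iz u && ~~ b.
Proof. by rewrite /iz /= xpair_eqE; case: b; rewrite ?andbT ?andbF. Qed.

Lemma xoC n (x y : IT n) : xo x y = xo y x.
Proof. elim: n x y => [|m IH] /=; first by []. by case=> u b [v c] /=; rewrite IH addbC. Qed.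

Lemma xoA n (x y z : IT n) : xo x (xo y z) = xo (xo x y) z.
Proof. elim: n x y z => [|m IH] /=; first by []. by case=> u b [v c] [w d] /=; rewrite IH addbA. Qed.

Lemma xo1 n (x : IT n) : xo (ix (CDone n)) x = x.
Proof. elim: n x => [|m IH] /=; first by case. by case=> u b /=; rewrite IH. Qed.

Lemma conjE n (x : CD n) : CDconj x = if iz x then x else CDneg x.
Proof.
elim: n x => [|m IH] /=; first by [].
case=> u [|] /=; rewrite izS ?andbF ?andbT //= IH; by case: (iz u).
Qed.

Lemma ix_conj n (x : CD n) : ix (CDconj x) = ix x.
Proof. by rewrite conjE; case: (iz x); rewrite ?ix_neg. Qed.

Lemma conjN n (x : CD n) : CDconj (CDneg x) = CDneg (CDconj x).
Proof. by rewrite !conjE iz_neg; case: (iz x). Qed.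

Lemma conjK n (x : CD n) : CDconj (CDconj x) = x.
Proof. rewrite (conjE x); case: ifP => h; rewrite ?conjN conjE ?h ?negK //. Qed.

Lemma mulN_both n : forall x y : CD n,
  CDmul x (CDneg y) = CDneg (CDmul x y) /\ CDmul (CDneg x) y = CDneg (CDmul x y).
Proof.
elim: n => [|m IH] /=; first by do 2 case.
case=> u [|] [v [|]] /=; rewrite ?conjN ?(IH _ _).1 ?(IH _ _).2 ?negK //.
Qed.

Lemma mulN n (x y : CD n) : CDmul x (CDneg y) = CDneg (CDmul x y).
Proof. exact: (mulN_both x y).1. Qed.
Lemma Nmul n (x y : CD n) : CDmul (CDneg x) y = CDneg (CDmul x y).
Proof. exact: (mulN_both x y).2. Qed.

Lemma ix_mul n (x y : CD n) : ix (CDmul x y) = xo (ix x) (ix y).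
Proof.
elim: n x y => [|m IH] /=; first by [].
case=> u [|] [v [|]] /=; rewrite ?ix_neg IH ?ix_conj // xoC //.
Qed.

Lemma conj1 n : CDconj (CDone n) = CDone n.
Proof. by rewrite conjE /iz eqxx. Qed.

Lemma mul1_both n (x : CD n) : CDmul (CDone n) x = x /\ CDmul x (CDone n) = x.
Proof.
elim: n x => [|m IH] /=; first by case.
case=> u [|] /=; rewrite ?conj1 ?(IH _).1 ?(IH _).2 //.
Qed.
Lemma mul1 n (x : CD n) : CDmul (CDone n) x = x. Proof. exact: (mul1_both x).1. Qed.
Lemma mulx1 n (x : CD n) : CDmul x (CDone n) = x. Proof. exact: (mul1_both x).2. Qed.

Lemma conj_inj n : injective (@CDconj n).
Proof. exact: can_inj (@conjK n). Qed.

Lemma mul_inj_both n (x : CD n) : injective (CDmul x) /\ injective (fun y => @CDmul n y x).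
Proof.
elim: n x => [|m IH] /=.
  by move=> x; split=> a b /= h; apply/eqP; move: h; case: x a b => [] [] [].
case=> u [|]; split; case=> v [|] [w [|]] //= [];
  try (move/neg_inj); try (move/(IH _).1); try (move/(IH _).2);
  try (move/conj_inj); by move=> ->.
Qed.

Definition cm n (x a : CD n) := [|| iz a, iz x | ix a == ix x].

Lemma cm_neg n (x a : CD n) : cm x (CDneg a) = cm x a.
Proof. by rewrite /cm iz_neg ix_neg. Qed.

Lemma commE n (x a : CD n) :
  CDmul a x = if cm x a then CDmul x a else CDneg (CDmul x a).
Proof.
elim: n x a => [|m IH] /=; first by do 2 case.
case=> u [|] [v [|]] /=; rewrite /cm !izS /= ?xpair_eqE ?andbT ?andbF ?orbF /=.
- rewrite !conjE /iz.
  case hu: (ix u == ix (CDone m)); case hv: (ix v == ix (CDone m));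
  case he: (ix v == ix u); rewrite ?Nmul (IH v u) /cm /iz hu hv eq_sym he /= ?negK //;
  move/eqP: hu => hu; move/eqP: hv => hv; move/eqP: he => he; congruence.
- by rewrite conjE; case: (iz v); rewrite ?mulN ?negK.
- by rewrite conjE; case: (iz u); rewrite ?mulN ?negK.
- by rewrite IH /cm; case: ifP.
Qed.

Definition X n (f : CD n -> CD n) := \big[addb/false]_(a | ~~ sgn a) sgn (f a).

Lemma bigS (R : Type) (idx : R) (op : Monoid.com_law idx) m (F : CD m.+1 -> R) :
  \big[op/idx]_(a : CD m.+1 | ~~ sgn a) F a
  = \big[op/idx]_(v : CD m | ~~ sgn v) op (F (v, true)) (F (v, false)).
Proof.
transitivity (\big[op/idx]_(v : CD m | ~~ sgn v) \big[op/idx]_(j : bool | true) F (v, j)); last first.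
  by apply: eq_bigr => v _; rewrite big_bool.
rewrite pair_big_dep /=; apply: eq_big; first by case=> v b; rewrite andbT.
by case.
Qed.

Lemma bigconst n (P : pred (CD n)) (k : bool) :
  \big[addb/false]_(a | P a) k = k && \big[addb/false]_(a | P a) true.
Proof. by case: k => //=; rewrite big1. Qed.

Definition C n := \big[addb/false]_(a : CD n | ~~ sgn a) true.

Lemma C0 : C 0 = true.
Proof. by rewrite /C big_mkcond big_bool. Qed.

Lemma CS m : C m.+1 = false.
Proof. by rewrite /C bigS big1. Qed.

Lemma sgn_mulconj n (u v : CD n) : sgn (CDmul u (CDconj v)) = sgn (CDmul u v) (+) ~~ iz v.
Proof. by rewrite conjE; case: (iz v); rewrite ?mulN ?sgn_neg ?addbT ?addbF. Qed.

Lemma sgn_conjmul n (u v : CD n) : sgn (CDmul (CDconj v) u) = sgn (CDmul v u) (+) ~~ iz v.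
Proof. by rewrite conjE; case: (iz v); rewrite ?Nmul ?sgn_neg ?addbT ?addbF. Qed.

Lemma XLS m (u : CD m) b :
  X (CDmul ((u, b) : CD m.+1)) = X (CDmul u) (+) X (fun v => CDmul v u) (+) (b && C m).
Proof.
rewrite /X bigS /=; case: b => /=.
  rewrite (eq_bigr (fun v => sgn (CDmul v u) (+) sgn (CDmul u v) (+) true)); last first.
    move=> v _; rewrite sgn_mulconj sgn_neg sgn_conjmul.
    by case: (sgn (CDmul v u)); case: (sgn (CDmul u v)); case: (iz v).
  rewrite !big_split /= /C; by rewrite [X in X (+) _ = _]addbC.
by rewrite big_split /= addbC addbF.
Qed.

Lemma XRS m (u : CD m) b :
  X (fun a : CD m.+1 => CDmul a (u, b)) = (if b then iz u else ~~ iz u) && C m.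
Proof.
rewrite /X bigS /=; case: b => /=.
  rewrite (eq_bigr (fun v => iz u)); last first.
    move=> v _; rewrite sgn_neg sgn_conjmul.
    by case: (sgn (CDmul u v)); case: (iz u).
  by rewrite bigconst.
rewrite (eq_bigr (fun v => ~~ iz u)); last first.
  move=> v _; rewrite sgn_mulconj.
  by case: (sgn (CDmul v u)); case: (iz u).
by rewrite bigconst.
Qed.

Lemma XL0 (u : CD 0) : X (CDmul u) = u.
Proof. by rewrite /X big_mkcond big_bool /=; case: u. Qed.
Lemma XR0 (u : CD 0) : X (fun v => CDmul v u) = u.
Proof. by rewrite /X big_mkcond big_bool /=; case: u. Qed.

Lemma X_gens m (x : CD m.+2) :
  X (CDmul x) = false /\ X (fun a => CDmul a x) = false.
Proof.
elim: m x => [|m IH].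
  case=> [[w c] b]; rewrite XLS XRS !CS !andbF addbF XLS XRS XL0 XR0 C0 /iz eqxx.
  rewrite !CS !andbF !andbT.
  by case: c; case: w.
case=> u b; rewrite (XLS (u : CD m.+2) b) (XRS (u : CD m.+2) b) !CS !andbF addbF (IH u).1 (IH u).2; by [].
Qed.

Lemma L0 n (pp : pred (CD n)) (H : CD n -> bool) :
  (forall a, pp (CDneg a) = ~~ pp a) -> (forall a, H (CDneg a) = H a) ->
  \big[addb/false]_(a | pp a) H a = \big[addb/false]_(a | ~~ sgn a) H a.
Proof.
move=> hp hH.
rewrite (bigID (fun a => ~~ sgn a)) [RHS](bigID pp) /=.
congr addb; first by apply: eq_bigl => a; rewrite andbC.
rewrite (reindex_inj (@neg_inj n)) /=.
apply: eq_big => a; first by rewrite hp sgn_neg negbK andbC.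
by rewrite hH.
Qed.

Definition ab n (b : CD n) := if sgn b then CDneg b else b.

Lemma ab_neg n (b : CD n) : ab (CDneg b) = ab b.
Proof. by rewrite /ab sgn_neg; case: (sgn b); rewrite /= ?negK. Qed.

Lemma X_mul n (p q : {perm CD n}) :
  (forall a, p (CDneg a) = CDneg (p a)) -> (forall a, q (CDneg a) = CDneg (q a)) ->
  X (p * q)%g = X p (+) X q.
Proof.
move=> hp hq.
have e1 a : sgn (q (p a)) = sgn (p a) (+) sgn (q (ab (p a))).
  rewrite /ab; case h: (sgn (p a)) => //=.
  by rewrite -{1}(negK (p a)) hq sgn_neg.
rewrite /X (eq_bigr (fun a => sgn (p a) (+) sgn (q (ab (p a))))); last first.
  by move=> a _; rewrite permM e1.
rewrite big_split /=; congr addb.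
transitivity (\big[addb/false]_(b | ~~ sgn b) sgn (q (ab b))); last first.
  by apply: eq_bigr => b hb; rewrite /ab (negbTE hb).
rewrite [RHS](reindex_inj (@perm_inj _ p)) /=.
symmetry; apply: L0 => a.
  by rewrite hp sgn_neg.
by rewrite hp ab_neg.
Qed.

Definition Mset n := [set f : {perm CD n} |
  [forall a, f (CDneg a) == CDneg (f a)]
  && [forall a, ix (f a) == xo (ix (f (CDone n))) (ix a)] && ~~ X f].

Lemma X1 n : X (1%g : {perm CD n}) = false.
Proof. by rewrite /X big1 // => a /negbTE; rewrite perm1. Qed.

Lemma Mgroup n : group_set (Mset n).
Proof.
apply/group_setP; split.
  rewrite inE X1 andbT; apply/andP; split; apply/forallP => a; rewrite !perm1 //.
  by rewrite xo1.
move=> f g; rewrite !inE => /andP [/andP [/forallP nf /forallP xf] Xf].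
move=> /andP [/andP [/forallP ng /forallP xg] Xg].
have nf' a : f (CDneg a) = CDneg (f a) by apply/eqP.
have ng' a : g (CDneg a) = CDneg (g a) by apply/eqP.
rewrite X_mul // (negbTE Xf) (negbTE Xg) andbT; apply/andP; split; apply/forallP => a.
  by rewrite !permM nf' ng'.
rewrite !permM (eqP (xg _)) (eqP (xf a)) (eqP (xg (f (CDone n)))) xoA.
by [].
Qed.

Definition Mg n := Group (Mgroup n).

Lemma gensP n p : p \in mlt_gens n ->
  (exists x, forall a, p a = CDmul x a) \/ (exists x, forall a, p a = CDmul a x).
Proof.
rewrite inE => /orP [/existsP [x /forallP h]|/existsP [x /forallP h]].
  by left; exists x => a; apply/eqP.
by right; exists x => a; apply/eqP.
Qed.

Lemma gens_M m : mlt_gens m.+2 \subset Mset m.+2.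
Proof.
apply/subsetP => p /gensP [[x h]|[x h]]; rewrite inE -andbA; apply/and3P; split.
- by apply/forallP => a; rewrite !h mulN.
- by apply/forallP => a; rewrite !h mulx1 ix_mul.
- have -> : X p = X (CDmul x) by apply: eq_bigr => a _; rewrite h.
  by rewrite (X_gens x).1.
- by apply/forallP => a; rewrite !h Nmul.
- by apply/forallP => a; rewrite !h mul1 ix_mul xoC.
- have -> : X p = X (fun a => CDmul a x) by apply: eq_bigr => a _; rewrite h.
  by rewrite (X_gens x).2.
Qed.

Lemma Mlt_M m : Mlt m.+2 \subset Mset m.+2.
Proof. by rewrite /Mlt (gen_subG _ (Mg m.+2)) gens_M. Qed.

Definition M1set := [set f : {perm CD 1} | [forall a, f a == CDmul (f (CDone 1)) a]].

Lemma M1group : group_set M1set.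
Proof.
apply/group_setP; split.
  by rewrite inE; apply/forallP => a; rewrite !perm1 mul1.
move=> f g; rewrite !inE => /forallP hf /forallP hg; apply/forallP => a.
rewrite !permM (eqP (hf a)) (eqP (hg _)) (eqP (hg (f _))) (eqP (hf (CDone 1))).
move: (g (CDone 1)) (f (CDone 1)) a => [[] []] [[] []] [[] []]; by [].
Qed.

Definition M1g := Group M1group.

Lemma Mlt_M1 : Mlt 1 \subset M1set.
Proof.
rewrite /Mlt (gen_subG _ M1g); apply/subsetP => p /gensP [[x h]|[x h]];
  rewrite inE; apply/forallP => a; rewrite !h.
  by clear h; move: x a => [[] []] [[] []].
by clear h; move: x a => [[] []] [[] []].
Qed.

Lemma Inn_upper n (f : {perm CD n}) : 0 < n -> f \in Inn n ->
  [/\ forall a, f (CDneg a) = CDneg (f a), forall a, ix (f a) = ix a & X f = false].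
Proof.
case: n f => [//|[|m]] f _; rewrite inE => /andP [hM /eqP h1].
  have: f \in M1set by apply: (subsetP Mlt_M1).
  rewrite inE => /forallP hf.
  have e a : f a = a by rewrite (eqP (hf a)) h1 mul1.
  have -> : f = 1%g by apply/permP => a; rewrite e perm1.
  by split => [a|a|]; rewrite ?perm1 ?X1.
have: f \in Mset m.+2 by apply: (subsetP (Mlt_M m)).
rewrite inE => /andP [/andP [/forallP nf /forallP xf] Xf]; split.
- by move=> a; apply/eqP.
- by move=> a; rewrite (eqP (xf a)) h1 xo1.
- exact: negbTE.
Qed.

Definition flip n (S : {set CD n}) : {perm CD n} := (\prod_(x in S) tperm x (CDneg x))%g.

Lemma flip_seq n (s : seq (CD n)) a : uniq s -> (forall x, x \in s -> CDneg x \notin s) ->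
  (\prod_(x <- s) tperm x (CDneg x))%g a = if (a \in s) || (CDneg a \in s) then CDneg a else a.
Proof.
elim: s a => [|x s IH] a /=; first by rewrite big_nil perm1.
move=> /andP [xs us] hs.
have hs' y : y \in s -> CDneg y \notin s.
  move=> ys; apply/negP => h; have yxs : y \in x :: s by rewrite in_cons ys orbT.
  move: (hs y yxs); by rewrite in_cons h orbT.
have nxs : CDneg x \notin s.
  by apply/negP => h0; move: (hs x (mem_head _ _)); rewrite in_cons h0 orbT.
rewrite big_cons permM !in_cons.
case: (a =P x) => [->|ax].
  by rewrite tpermL IH // (negbTE xs) (negbTE nxs) negK (negbTE xs).
case: (a =P CDneg x) => [->|anx].
  by rewrite tpermR IH // (negbTE xs) (negbTE nxs) negK eqxx !orbT.
rewrite tpermD; last 2 first.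
- by apply/eqP => h; apply: ax.
- by apply/eqP => h; apply: anx.
rewrite IH //.
have -> : (CDneg a == x) = false by apply/eqP => h; apply: anx; rewrite -h negK.
by [].
Qed.

Lemma flipE n (S : {set CD n}) a : (forall x, x \in S -> CDneg x \notin S) ->
  flip S a = if (a \in S) || (CDneg a \in S) then CDneg a else a.
Proof.
move=> hS; rewrite /flip -big_filter flip_seq ?filter_uniq ?index_enum_uniq //.
  by rewrite !mem_filter !mem_index_enum !andbT.
by move=> x; rewrite !mem_filter !mem_index_enum !andbT; apply: hS.
Qed.

Definition Lp n (x : CD n) := perm (mul_inj_both x).1.
Definition Rp n (x : CD n) := perm (mul_inj_both x).2.
Definition T n (x : CD n) := (Rp x * (Lp x)^-1)%g.

Lemma mem_Mlt_L n (x : CD n) : Lp x \in Mlt n.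
Proof.
apply: mem_gen; rewrite inE; apply/orP; left; apply/existsP; exists x.
by apply/forallP => a; rewrite permE.
Qed.

Lemma mem_Mlt_R n (x : CD n) : Rp x \in Mlt n.
Proof.
apply: mem_gen; rewrite inE; apply/orP; right; apply/existsP; exists x.
by apply/forallP => a; rewrite permE.
Qed.

Lemma TE n (x a : CD n) : T x a = if cm x a then a else CDneg a.
Proof.
rewrite permM.
have hR : Rp x a = CDmul a x by rewrite /Rp permE.
have hL y : CDmul x y = Lp x y by rewrite /Lp permE.
rewrite hR commE; case: (cm x a); first by rewrite hL permK.
by rewrite -mulN hL permK.
Qed.

Lemma T_inn n (x : CD n) : T x \in Inn n.
Proof.
rewrite inE groupM ?groupV ?mem_Mlt_L ?mem_Mlt_R //=.
by rewrite TE /cm /iz eqxx.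
Qed.

Lemma prodT_seq n (s : seq (CD n)) a :
  (\prod_(x <- s) T x)%g a = if odd (count (fun x => ~~ cm x a) s) then CDneg a else a.
Proof.
elim: s a => [|x s IH] a /=; first by rewrite big_nil perm1.
rewrite big_cons permM TE; case: (cm x a) => /=; first by rewrite IH.
rewrite IH (eq_count (a2 := fun y => ~~ cm y a)); last by move=> y; rewrite cm_neg.
by case: (odd _); rewrite ?negK.
Qed.

Lemma ix_eq n (a x : CD n) : (ix a == ix x) = (a == x) || (a == CDneg x).
Proof.
apply/eqP/orP => [/esym/ixP [->|->]|[/eqP->|/eqP->]]; rewrite ?ix_neg; auto.
Qed.

Lemma count_cm n (s : seq (CD n)) a : uniq s -> (forall x, x \in s -> ~~ sgn x && ~~ iz x) ->
  odd (count (fun x => ~~ cm x a) s)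
  = ~~ iz a && (odd (size s) (+) ((a \in s) || (CDneg a \in s))).
Proof.
elim: s => [|x s IH] /=; first by rewrite andbF.
move=> /andP [xs us] hs.
have hs' y : y \in s -> ~~ sgn y && ~~ iz y by move=> ys; apply: hs; rewrite in_cons ys orbT.
have /andP [px zx] : ~~ sgn x && ~~ iz x by apply: hs; rewrite mem_head.
have nxs : CDneg x \notin s.
  by apply/negP => h; move: (hs' _ h); rewrite sgn_neg (negbTE px).
rewrite oddD IH // /cm (negbTE zx) !in_cons.
case: (iz a) => //=.
rewrite ix_eq.
case: (a =P x) => [->|ax] /=.
  by rewrite ?eqxx ?(negbTE xs) ?(negbTE nxs) /=; case: (odd _).
case: (a =P CDneg x) => [->|anx] /=.
  by rewrite ?negK ?eqxx ?(negbTE xs) ?(negbTE nxs) /= ?orbT; case: (odd _).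
have -> : (CDneg a == x) = false by apply/eqP => h; apply: anx; rewrite -h negK.
by rewrite /=; case: (odd _); case: (_ || _).
Qed.

Lemma sgn1 n : sgn (CDone n) = false.
Proof. by elim: n. Qed.

Definition Pp n := [set a : CD n | ~~ sgn a & a != CDone n].
Definition Ev n := [set S : {set CD n} | (S \subset Pp n) && ~~ odd #|S|].

Lemma Pp_nz n (a : CD n) : a \in Pp n -> ~~ sgn a && ~~ iz a.
Proof.
rewrite inE => /andP [pa a1]; rewrite pa /=; apply/negP => /eqP/esym/ixP [h|h].
  by rewrite h eqxx in a1.
by move: pa; rewrite h sgn_neg sgn1.
Qed.

Lemma posS n (S : {set CD n}) : S \subset Pp n -> forall x, x \in S -> CDneg x \notin S.
Proof.
move=> sS x xS; apply/negP => nxS.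
move: (Pp_nz (subsetP sS _ xS)) (Pp_nz (subsetP sS _ nxS)).
by rewrite sgn_neg => /andP [-> _].
Qed.

Lemma flip_prodT n (S : {set CD n}) : S \in Ev n -> flip S = (\prod_(x in S) T x)%g.
Proof.
rewrite inE => /andP [sS eS]; apply/permP => a.
rewrite flipE; last exact: posS.
rewrite -big_filter prodT_seq count_cm; first last.
- by move=> x; rewrite mem_filter => /andP [xS _]; apply: Pp_nz; apply: (subsetP sS).
- by rewrite filter_uniq // index_enum_uniq.
have -> : size [seq x <- index_enum (CD n) | x \in S] = #|S| by rewrite cardE.
rewrite (negbTE eS) /= !mem_filter !mem_index_enum !andbT.
case za: (iz a) => //=.
have -> : a \in S = false.
  by apply/negP => /(subsetP sS)/Pp_nz; rewrite za andbF.
have -> : CDneg a \in S = false.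
  by apply/negP => /(subsetP sS)/Pp_nz; rewrite iz_neg za andbF.
by [].
Qed.

Lemma Inn_group n : group_set (Inn n).
Proof.
apply/group_setP; split; first by rewrite inE group1 perm1 eqxx.
move=> f g; rewrite !inE => /andP [fM /eqP f1] /andP [gM /eqP g1].
by rewrite groupM //= permM f1 g1.
Qed.

Definition Inng n := Group (Inn_group n).

Lemma flip_inn n (S : {set CD n}) : S \in Ev n -> flip S \in Inn n.
Proof.
move=> hS; rewrite flip_prodT //.
have := @group_prod _ (Inng n) _ (index_enum (CD n)) (fun x => x \in S) (@T n).
by apply => x _; apply: T_inn.
Qed.

Lemma odd_card n (P : pred (CD n)) :
  \big[addb/false]_(a | P a) true = odd #|[set a | P a]|.
Proof.
rewrite -sum1dep_card (big_morph odd oddD (erefl (odd 0))).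
by apply: eq_bigr.
Qed.

Lemma Inn_sub n (f : {perm CD n}) : 0 < n -> f \in Inn n ->
  [set a | ~~ sgn a && (f a != a)] \in Ev n /\ f = flip [set a | ~~ sgn a && (f a != a)].
Proof.
move=> n0 fI; have [nf ixf Xf] := Inn_upper n0 fI.
move: fI; rewrite inE => /andP [_ /eqP f1].
set S := [set a | _].
have diag a : f a = a \/ f a = CDneg a by apply: ixP; rewrite ixf.
have sS : S \subset Pp n.
  apply/subsetP => a; rewrite !inE => /andP [-> fa] /=.
  by apply: contra fa => /eqP ->; rewrite f1.
split.
  rewrite inE sS /=.
  have e : \big[addb/false]_(a | ~~ sgn a && (f a != a)) true = X f.
    rewrite /X big_mkcondr; apply: eq_bigr => a pa.
    by case: (diag a) => ->; rewrite ?eqxx ?neg_neq ?sgn_neg (negbTE pa).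
  by rewrite /S -odd_card e Xf.
apply/permP => a; rewrite flipE; last exact: posS.
rewrite !inE sgn_neg negbK nf.
case: (diag a) => ->; rewrite ?negK ?eqxx ?andbF /=; first by case: (sgn a).
by rewrite neg_neq eq_sym neg_neq; case: (sgn a).
Qed.

Lemma negPp n (S : {set CD n}) a : S \subset Pp n -> sgn a -> a \in S = false.
Proof. by move=> sS sa; apply/negP => /(subsetP sS)/Pp_nz; rewrite sa. Qed.

Lemma flip_inj n : {in Ev n &, injective (fun S => @flip n S)}.
Proof.
move=> S S'; rewrite !inE => /andP [sS _] /andP [sS' _] e.
apply/setP => a; case sa: (sgn a); first by rewrite !negPp.
have := congr1 (fun p : {perm CD n} => p a) e; rewrite /= !flipE; try exact: posS.
rewrite !(@negPp _ _ (CDneg a)) ?sgn_neg ?sa // !orbF.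
case: (a \in S); case: (a \in S') => // h.
  by move: (neg_neq a); rewrite h eqxx.
by move: (neg_neq a); rewrite -h eqxx.
Qed.

Lemma Inn_eq n : 0 < n -> Inn n = [set flip S | S in Ev n].
Proof.
move=> n0; apply/setP => f; apply/idP/imsetP.
  by move=> fI; have [h1 h2] := Inn_sub n0 fI; eexists; [exact: h1|exact: h2].
by case=> S hS ->; apply: flip_inn.
Qed.

Lemma card_even (T : finType) (A : {set T}) : 0 < #|A| ->
  #|[set S : {set T} | (S \subset A) && ~~ odd #|S|]| = 2 ^ (#|A|.-1).
Proof.
move=> /card_gt0P [a0 a0A].
pose h (S : {set T}) := if a0 \in S then S :\ a0 else a0 |: S.
have hK : involutive h.
  move=> S; rewrite /h; case: (boolP (a0 \in S)) => aS.
    by rewrite setD11 setD1K.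
  by rewrite setU11 setU1K.
have hodd S : odd #|h S| = ~~ odd #|S|.
  rewrite /h; case: ifP => aS.
    by rewrite [in RHS](cardsD1 a0) aS /= negbK.
  by rewrite cardsU1 aS.
have hsub S : (h S \subset A) = (S \subset A).
  rewrite /h; case: ifP => aS.
    apply/idP/idP => sS; last by apply: subset_trans sS; apply: subsetDl.
    by rewrite -(setD1K aS) subUset sub1set a0A.
  by rewrite subUset sub1set a0A.
set E := [set S | _].
set O := [set S : {set T} | (S \subset A) && odd #|S|].
have hEO : h @: E \subset O.
  by apply/subsetP => y /imsetP [S]; rewrite !inE => /andP [sS oS] ->; rewrite hsub hodd sS.
have hOE : h @: O \subset E.
  by apply/subsetP => y /imsetP [S]; rewrite !inE => /andP [sS oS] ->; rewrite hsub hodd sS oS.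
have hinj : injective h := inv_inj hK.
have eEO : #|E| = #|O|.
  apply/eqP; rewrite eqn_leq; apply/andP; split.
    by rewrite -(card_imset _ hinj); apply: subset_leq_card.
  by rewrite -(card_imset _ hinj); apply: subset_leq_card.
have : #|E| + #|O| = 2 ^ #|A|.
  rewrite -card_powerset -cardsUI.
  have -> : E :&: O = set0.
    by apply/setP => S; rewrite !inE; case: (odd _); rewrite !andbF.
  rewrite cards0 addn0; apply: eq_card => S; rewrite !inE. by case: (S \subset A); case: (odd _).
rewrite -eEO addnn (cardsD1 a0 A) a0A /= expnS => /eqP.
by rewrite -muln2 mulnC eqn_mul2l /= => /eqP.
Qed.

Lemma card_pos n : #|[set a : CD n | ~~ sgn a]| = 2 ^ n.
Proof.
rewrite -sum1dep_card; elim: n => [|m IH].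
  by rewrite big_mkcond big_bool.
rewrite bigS big_split /= IH.
by rewrite expnS mul2n addnn.
Qed.

Lemma card_Pp n : #|Pp n| = 2 ^ n - 1.
Proof.
rewrite -(card_pos n) (cardsD1 (CDone n) [set a | ~~ sgn a]) inE sgn1 /= add1n subSS subn0.
by apply: eq_card => a; rewrite !inE andbC.
Qed.

Lemma Inn_diag n (f : {perm CD n}) : 0 < n -> f \in Inn n ->
  (forall a, f (CDneg a) = CDneg (f a)) /\ (forall a, f a = a \/ f a = CDneg a).
Proof.
move=> n0 fI; have [nf ixf _] := Inn_upper n0 fI; split => // a.
by apply: ixP; rewrite ixf.
Qed.

Theorem mainTheorem5 (n : nat) (hn : 0 < n) :
  [/\ (2.-abelem (Inn n))%g,
      #|Inn n| = 2 ^ (2 ^ n - 2)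
    & forall f : {perm CD n}, f \in Inn n ->
        exists S : {set CD n},
          (forall x : CD n, x \in S -> CDneg x \notin S) /\
          f = (\prod_(x in S) tperm x (CDneg x))%g ].
Proof.
split.
- change (2.-abelem (Inng n))%g.
  apply/(abelemP (isT : prime 2)); split.
    apply/centsP => f fI g gI; apply/permP => a; rewrite !permM.
    have [nf df] := Inn_diag hn fI; have [ng dg] := Inn_diag hn gI.
    by case: (df a) => ha; case: (dg a) => hb; rewrite ?ha ?hb ?nf ?ng ?ha ?hb.
  move=> f fI; apply/permP => a; rewrite expgS expg1 permM perm1.
  have [nf df] := Inn_diag hn fI.
  by case: (df a) => h; rewrite h ?nf h ?negK.
- rewrite (Inn_eq hn) card_in_imset; last exact: flip_inj.
  have hP : #|Pp n| = 2 ^ n - 1 by apply: card_Pp.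
  rewrite /Ev card_even; rewrite hP; last by rewrite subn_gt0 -{1}(expn0 2) ltn_exp2l.
  by rewrite -subn1 -subnDA.
move=> f fI; have [hS ->] := Inn_sub hn fI.
eexists; split; last by reflexivity.
by apply: posS; move: hS; rewrite inE => /andP [].
Qed.
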